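(* Let $(Q,\cdot)$ be a quasigroup satisfying $x(y(zz))=(x(yz))z$ for all $x,y,z\in Q$ (an LG1-quasigroup). Then $Q$ satisfies each of the following identities for all $x,y,z\in Q$: (1) $x(y(zy))=(x(yz))y$ (LG3); (2) $x(y(yz))=(x(yy))z$ (LC4); (3) $x(y(xz))=(x(yx))z$ (left Bol).
   Context: A quasigroup is a set $Q$ with a binary operation $\cdot$ (written as juxtaposition) such that for all $a,b\in Q$ each of the equations $ax=b$ and $ya=b$ has a unique solution in $Q$. *)

(* Defs.v *)
Definition is_quasigroup {Q : Type} (mul : Q -> Q -> Q) : Prop :=
  (forall a b : Q, exists! x : Q, mul a x = b) /\
  (forall a b : Q, exists! y : Q, mul y a = b).

(* Main.v *)
Require Import Defs.
From Stdlib Require Import IndefiniteDescription.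

Theorem mainTheorem7 (Q : Type) (mul : Q -> Q -> Q)
  (hQ : is_quasigroup mul)
  (hLG1 : forall x y z : Q, mul x (mul y (mul z z)) = mul (mul x (mul y z)) z) :
  (forall x y z : Q, mul x (mul y (mul z y)) = mul (mul x (mul y z)) y) /\
  (forall x y z : Q, mul x (mul y (mul y z)) = mul (mul x (mul y y)) z) /\
  (forall x y z : Q, mul x (mul y (mul x z)) = mul (mul x (mul y x)) z).
Proof.
  destruct hQ as [HL HR].
  assert (lc : forall a x y, mul a x = mul a y -> x = y).
  { intros a x y H. destruct (HL a (mul a x)) as [u [_ Hu]].
    rewrite <- (Hu x eq_refl), <- (Hu y (eq_sym H)). reflexivity. }
  assert (rc : forall a x y, mul x a = mul y a -> x = y).
  { intros a x y H. destruct (HR a (mul x a)) as [u [_ Hu]].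
    rewrite <- (Hu x eq_refl), <- (Hu y (eq_sym H)). reflexivity. }
  assert (Hldx : exists ld : Q -> Q -> Q, forall a b, mul a (ld a b) = b).
  { exists (fun a b => proj1_sig (constructive_indefinite_description _ (HL a b))).
    intros a b. exact (proj1 (proj2_sig (constructive_indefinite_description _ (HL a b)))). }
  assert (Hrdx : exists rd : Q -> Q -> Q, forall a b, mul (rd b a) a = b).
  { exists (fun b a => proj1_sig (constructive_indefinite_description _ (HR a b))).
    intros a b. exact (proj1 (proj2_sig (constructive_indefinite_description _ (HR a b)))). }
  destruct Hldx as [ld Hld]. destruct Hrdx as [rd Hrd].
  assert (G : forall x y w z, mul x (mul y (mul w z)) = mul (mul x (mul y w)) z).
  2:{ split; [|split]; intros; apply G. }
  intros x0 y0 w0 z0.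
  set (e := mul (rd x0 (mul x0 x0)) x0).
  assert (He : forall w, mul w e = w).
  { intros w. apply (rc x0). unfold e. rewrite <- hLG1, Hrd. reflexivity. }
  clearbody e.
  assert (ee : mul e e = e) by apply He.
  assert (Hldm : forall b, ld e (mul e b) = b).
  { intros b. apply (lc e). rewrite Hld. reflexivity. }
  assert (Hcx : exists c : Q -> Q -> Q, forall a b, c a b = mul a (ld e b))
    by (exists (fun a b => mul a (ld e b)); reflexivity).
  destruct Hcx as [c Hc].
  assert (Hpx : exists phi : Q -> Q, forall b, phi b = mul e b)
    by (exists (fun b => mul e b); reflexivity).
  destruct Hpx as [phi Hphi].
  assert (Hmul : forall a b, mul a b = c a (phi b)).
  { intros. rewrite Hc, Hphi, Hldm. reflexivity. }
  assert (ce : forall b, c e b = b) by (intros; rewrite Hc; apply Hld).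
  assert (phie : phi e = e) by (rewrite Hphi; exact ee).
  assert (LA : forall x u z, mul (mul x u) z = mul x (mul (rd u z) (mul z z))).
  { intros x u z. rewrite hLG1, Hrd. reflexivity. }
  assert (phisurj : forall w, phi (ld e w) = w) by (intros; rewrite Hphi; apply Hld).
  assert (assoc : forall x u w, c x (c u w) = c (c x u) w).
  { intros x u w. rewrite <- (phisurj u), <- (phisurj w).
    rewrite <- !Hmul, LA.
    assert (H1 : mul u (ld e w) = phi (mul (rd (ld e u) (ld e w)) (mul (ld e w) (ld e w)))).
    { rewrite Hphi, <- LA, Hld. reflexivity. }
    rewrite (phisurj u), H1, <- Hmul. reflexivity. }
  assert (clc : forall x a b, c x a = c x b -> a = b).
  { intros x a b H. rewrite !Hc in H. apply lc in H.
    rewrite <- (Hld e a), <- (Hld e b), H. reflexivity. }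
  assert (crc : forall x a b, c a x = c b x -> a = b).
  { intros x a b H. rewrite !Hc in H. apply rc in H. exact H. }
  assert (phiinj : forall a b, phi a = phi b -> a = b).
  { intros a b H. rewrite !Hphi in H. apply lc in H. exact H. }
  assert (cr1 : forall a, c a e = a).
  { intros a. rewrite Hc. rewrite <- ee at 2. rewrite Hldm. apply He. }
  assert (rinv : forall a, exists y, c y a = e).
  { intros a. exists (rd e (ld e a)). rewrite Hc. apply Hrd. }
  assert (linv : forall a y, c y a = e -> c a y = e).
  { intros a y H. apply (crc a). rewrite <- assoc, H, cr1, ce. reflexivity. }
  assert (E1 : forall y z, phi (c y (phi (c z (phi z)))) = c (phi (c y (phi z))) (phi z)).
  { intros y z. rewrite <- !Hmul, !Hphi. apply hLG1. }
  assert (F1 : forall z, phi (c z (phi z)) = c (phi z) z).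
  { intros z. destruct (rinv (phi z)) as [y Hy].
    pose proof (E1 y z) as H. rewrite Hy, phie, ce in H.
    apply phiinj in H.
    transitivity (c (phi z) (c y (phi (c z (phi z))))).
    { rewrite assoc, (linv _ _ Hy), ce. reflexivity. }
    rewrite H. reflexivity. }
  assert (hom : forall v z, phi (c v z) = c (phi v) (phi z)).
  { intros v z. destruct (rinv (phi z)) as [y Hy].
    pose proof (E1 (c v y) z) as H.
    rewrite <- (assoc v y (phi z)), Hy, cr1, F1 in H.
    rewrite <- (assoc v y), (assoc y), Hy, ce in H. exact H. }
  assert (inv : forall z, phi (phi z) = z).
  { intros z. pose proof (F1 z) as H. rewrite hom in H. apply clc in H. exact H. }
  rewrite !Hmul, !hom, !inv, !assoc. reflexivity.
Qed.
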